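(* Let $F \subseteq \mathsf{L}_\mu$ and let $\mu\phi \in \Pi(F)$. Then there exist a formula $\mu\psi \in F$, a set of variables $V$ and a substitution $\theta\colon V \to \Pi(F)$ such that $\phi = \psi[\theta]$.
   Context: Formulas of the modal $\mu$-calculus ($\mathsf{L}_\mu$) are built from a countable set $\mathsf{Var}$ of variables and negated variables $\neg x$ ($x\in\mathsf{Var}$), together called literals, by the grammar: literals, $\square\alpha$, $\diamond\alpha$, $\bigwedge\Gamma$, $\bigvee\Gamma$ for finite sets $\Gamma$ of formulas, and $\mu\phi$, $\nu\phi$ for predicates $\phi=\lambda x.\alpha$ where $\alpha$ is $x$-positive (i.e. $\neg x$ does not occur in $\alpha$). Formulas and predicates are identified up to renaming of bound variables. Negation is the involution $\alpha\mapsto\alpha^\bot$ with $x^\bot=\neg x$, $(\neg x)^\bot=x$, $(\bigwedge\Gamma)^\bot=\bigvee\{\gamma^\bot:\gamma\in\Gamma\}$, $(\square\alpha)^\bot=\diamond\alpha^\bot$, $(\mu\lambda x.\alpha)^\bot=\nu\lambda x.(\alpha[x:=\neg x])^\bot$, and duals. A substitution is a map $\theta\colon V\to\mathsf{L}_\mu$ with $V\subseteq\mathsf{Var}$; $\eta[\theta]$ is the simultaneous capture-avoiding substitution of $\theta(x)$ for free occurrences of $x$ in $\eta$, where an occurrence $\neg x$ with $x\in V$ is replaced by $\theta(x)^\bot$; for predicates $(\lambda y.\alpha)[\theta]=\lambda y.\alpha[\theta]$ with $y$ fresh. A formula is $V$-positive if $\neg x$ does not occur in it for every $x\in V$. For $F\subseteq\mathsf{L}_\mu$,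 $\Pi(F)$ is the smallest set of formulas such that: (1) $F$ and all literals belong to $\Pi(F)$; (2) if $\Gamma\subseteq\Pi(F)$ finite then $\bigvee\Gamma,\bigwedge\Gamma\in\Pi(F)$; (3) if $\alpha\in\Pi(F)$ then $\square\alpha,\diamond\alpha\in\Pi(F)$; (4) if $\phi=\lambda x.\alpha$ with $\alpha\in\Pi(F)$ then $\nu\phi\in\Pi(F)$; (5) if $\alpha\in\Pi(F)$ is $V$-positive and $\theta\colon V\to\Pi(F)$, then $\alpha[\theta]\in\Pi(F)$. *)

(* Defs.v *)
From mathcomp Require Import all_boot.
From Stdlib Require List.

Set Implicit Arguments.
Unset Strict Implicit.
Unset Printing Implicit Defensive.

(* Formulas of the modal mu-calculus, in locally-nameless style:
   free variables are named by nat (the countable set Var), bound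
   variables are de Bruijn indices [BVar n].  Since a predicate
   lambda x.alpha requires alpha to be x-positive, bound variables only
   ever occur positively, so no negated bound-variable constructor is
   needed.  Finite sets Gamma are represented by lists, and formulas
   are compared with [feq] below, which identifies lists that denote
   the same set.  Renaming of bound variables is built in (de Bruijn). *)
Inductive form : Type :=
  | FVar  of nat
  | FNVar of nat
  | BVar  of nat
  | Box   of form
  | Dia   of form
  | And   of list form
  | Or    of list form
  | Mu    of form
  | Nu    of form.

(* local closedness: all de Bruijn indices are bound; [lc_at 0 f] means
   f is a genuine formula of L_mu *)
Fixpoint lc_at (k : nat) (f : form) : bool :=
  match f with
  | FVar _ | FNVar _ => true
  | BVar n => n < k
  | Box a | Dia a => lc_at k a
  | And l | Or l => all (lc_at k) l
  | Mu a | Nu a => lc_at k.+1 a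
  end.

Fixpoint occurs_neg (x : nat) (f : form) : bool :=
  match f with
  | FVar _ | BVar _ => false
  | FNVar y => y == x
  | Box a | Dia a => occurs_neg x a
  | And l | Or l => has (occurs_neg x) l
  | Mu a | Nu a => occurs_neg x a
  end.

(* negation (the involution alpha |-> alpha^bot).  Bound variables are
   unchanged: (mu lambda x.a)^bot = nu lambda x.(a[x:=~x])^bot. *)
Fixpoint neg (f : form) : form :=
  match f with
  | FVar x => FNVar x
  | FNVar x => FVar x
  | BVar n => BVar n
  | Box a => Dia (neg a)
  | Dia a => Box (neg a)
  | And l => Or (map neg l)
  | Or l => And (map neg l)
  | Mu a => Nu (neg a)
  | Nu a => Mu (neg a)
  end.

(* a substitution theta : V -> L_mu is a partial map nat -> option form,
   with V its domain.  alpha[theta] replaces x by theta x and ~x by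
   (theta x)^bot for x in V.  Bound variables are de Bruijn indices, so
   substitution under binders is capture-avoiding (values are closed). *)
Fixpoint subst (th : nat -> option form) (f : form) : form :=
  match f with
  | FVar x => if th x is Some g then g else FVar x
  | FNVar x => if th x is Some g then neg g else FNVar x
  | BVar n => BVar n
  | Box a => Box (subst th a)
  | Dia a => Dia (subst th a)
  | And l => And (map (subst th) l)
  | Or l => Or (map (subst th) l)
  | Mu a => Mu (subst th a)
  | Nu a => Nu (subst th a)
  end.

(* abstraction: [close x k a] replaces the free variable x by the bound
   index k (at depth); Nu (close x 0 a) represents nu (lambda x. a). *)
Fixpoint close (x k : nat) (f : form) : form :=
  match f with
  | FVar y => if y == x then BVar k else FVar y
  | FNVar y => FNVar y
  | BVar n => BVar n
  | Box a => Box (close x k a)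
  | Dia a => Dia (close x k a)
  | And l => And (map (close x k) l)
  | Or l => Or (map (close x k) l)
  | Mu a => Mu (close x k.+1 a)
  | Nu a => Nu (close x k.+1 a)
  end.

(* identity of formulas: finite sets Gamma are equal iff they have the
   same (identified) elements *)
Inductive feq : form -> form -> Prop :=
  | feq_var x : feq (FVar x) (FVar x)
  | feq_nvar x : feq (FNVar x) (FNVar x)
  | feq_bvar n : feq (BVar n) (BVar n)
  | feq_box a b : feq a b -> feq (Box a) (Box b)
  | feq_dia a b : feq a b -> feq (Dia a) (Dia b)
  | feq_and l1 l2 :
      (forall a, List.In a l1 -> exists b, List.In b l2 /\ feq a b) ->
      (forall b, List.In b l2 -> exists a, List.In a l1 /\ feq a b) ->
      feq (And l1) (And l2)
  | feq_or l1 l2 :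
      (forall a, List.In a l1 -> exists b, List.In b l2 /\ feq a b) ->
      (forall b, List.In b l2 -> exists a, List.In a l1 /\ feq a b) ->
      feq (Or l1) (Or l2)
  | feq_mu a b : feq a b -> feq (Mu a) (Mu b)
  | feq_nu a b : feq a b -> feq (Nu a) (Nu b).

(* Pi(F): the smallest set of formulas (closed under identification)
   satisfying clauses (1)-(5). *)
Inductive Pi (F : form -> Prop) : form -> Prop :=
  | Pi_F a : F a -> Pi F a
  | Pi_var x : Pi F (FVar x)
  | Pi_nvar x : Pi F (FNVar x)
  | Pi_and l : (forall g, List.In g l -> Pi F g) -> Pi F (And l)
  | Pi_or l : (forall g, List.In g l -> Pi F g) -> Pi F (Or l)
  | Pi_box a : Pi F a -> Pi F (Box a)
  | Pi_dia a : Pi F a -> Pi F (Dia a)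
  | Pi_nu x a : Pi F a -> ~~ occurs_neg x a -> Pi F (Nu (close x 0 a))
  | Pi_subst a (th : nat -> option form) :
      Pi F a ->
      (forall x, th x <> None -> ~~ occurs_neg x a) ->
      (forall x g, th x = Some g -> Pi F g) ->
      Pi F (subst th a)
  | Pi_feq a b : Pi F a -> feq a b -> Pi F b.

(* Main.v *)
Require Import Defs.
From mathcomp Require Import all_boot.
From Stdlib Require List.

Section Aux.

Definition form_ind' (P : form -> Prop)
  (hv : forall x, P (FVar x)) (hn : forall x, P (FNVar x)) (hb : forall n, P (BVar n))
  (hbox : forall a, P a -> P (Box a)) (hdia : forall a, P a -> P (Dia a))
  (hand : forall l, (forall g, List.In g l -> P g) -> P (And l))
  (hor : forall l, (forall g, List.In g l -> P g) -> P (Or l))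
  (hmu : forall a, P a -> P (Mu a)) (hnu : forall a, P a -> P (Nu a)) :
  forall f, P f :=
  fix go f := match f as f0 return P f0 with
  | FVar x => hv x | FNVar x => hn x | BVar n => hb n
  | Box a => hbox a (go a) | Dia a => hdia a (go a)
  | And l => hand l ((fix gol (l : list form) : forall g, List.In g l -> P g :=
       match l as l0 return forall g, List.In g l0 -> P g with
       | nil => fun g H => False_ind _ H
       | cons h t => fun g H => match H with
            | or_introl e => eq_ind h P (go h) g e
            | or_intror H' => gol t g H' end end) l)
  | Or l => hor l ((fix gol (l : list form) : forall g, List.In g l -> P g :=
       match l as l0 return forall g, List.In g l0 -> P g with
       | nil => fun g H => False_ind _ H
       | cons h t => fun g H => match H with
            | or_introl e => eq_ind h P (go h) g e
            | or_intror H' => gol t g H' end end) l)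
  | Mu a => hmu a (go a) | Nu a => hnu a (go a)
  end.

Lemma has_In (p : pred form) l : has p l -> exists g, List.In g l /\ p g.
Proof.
elim: l => //= h t IH /orP [H|H]; first by exists h; split; [left|].
by case: (IH H) => g [? ?]; exists g; split; [right|].
Qed.

Lemma In_has (p : pred form) l g : List.In g l -> p g -> has p l.
Proof.
elim: l => //= h t IH [<-|H] Hp; first by rewrite Hp.
by rewrite (IH H Hp) orbT.
Qed.

Lemma map_ext_In (f1 f2 : form -> form) l :
  (forall g, List.In g l -> f1 g = f2 g) -> map f1 l = map f2 l.
Proof.
elim: l => //= h t IH H; rewrite H; last by left.
by rewrite IH // => g Hg; apply: H; right.
Qed.

Lemma feq_refl a : feq a a.
Proof.
elim/form_ind': a; try by constructor.
- move=> l IH; constructor=> g Hg; exists g; split => //; exact: IH.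
- move=> l IH; constructor=> g Hg; exists g; split => //; exact: IH.
Qed.

Lemma feq_sym a : forall b, feq a b -> feq b a.
Proof.
elim/form_ind': a; try by move=> *; match goal with H : feq _ _ |- _ => inversion H end; subst; constructor; auto.
- move=> l IH b Hb; inversion Hb as [| | | | |? ? H1 H2|? ? H1 H2| |]; subst; constructor.
  + move=> y Hy; case: (H2 y Hy) => x [Hx Hxy]; exists x; split => //; exact: IH.
  + move=> x Hx; case: (H1 x Hx) => y [Hy Hxy]; exists y; split => //; exact: IH.
- move=> l IH b Hb; inversion Hb as [| | | | |? ? H1 H2|? ? H1 H2| |]; subst; constructor.
  + move=> y Hy; case: (H2 y Hy) => x [Hx Hxy]; exists x; split => //; exact: IH.
  + move=> x Hx; case: (H1 x Hx) => y [Hy Hxy]; exists y; split => //; exact: IH.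
Qed.

Lemma feq_trans a : forall b c, feq a b -> feq b c -> feq a c.
Proof.
elim/form_ind': a.
- move=> x b c H1 H2; inversion H1; subst; done.
- move=> x b c H1 H2; inversion H1; subst; done.
- move=> x b c H1 H2; inversion H1; subst; done.
- move=> a IH b c H1 H2; inversion H1; subst; inversion H2; subst; constructor; eauto.
- move=> a IH b c H1 H2; inversion H1; subst; inversion H2; subst; constructor; eauto.
- move=> l IH b c H1 H2; inversion H1 as [| | | | |? ? H3 H5|? ? H3 H5| |]; subst; inversion H2 as [| | | | |? ? H4 H6|? ? H4 H6| |]; subst; constructor.
  + move=> x Hx; case: (H3 x Hx) => y [Hy Hxy]; case: (H4 y Hy) => z [Hz Hyz].
    exists z; split => //; exact: IH Hxy Hyz.
  + move=> z Hz; case: (H6 z Hz) => y [Hy Hyz]; case: (H5 y Hy) => x [Hx Hxy].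
    exists x; split => //; exact: IH Hxy Hyz.
- move=> l IH b c H1 H2; inversion H1 as [| | | | |? ? H3 H5|? ? H3 H5| |]; subst; inversion H2 as [| | | | |? ? H4 H6|? ? H4 H6| |]; subst; constructor.
  + move=> x Hx; case: (H3 x Hx) => y [Hy Hxy]; case: (H4 y Hy) => z [Hz Hyz].
    exists z; split => //; exact: IH Hxy Hyz.
  + move=> z Hz; case: (H6 z Hz) => y [Hy Hyz]; case: (H5 y Hy) => x [Hx Hxy].
    exists x; split => //; exact: IH Hxy Hyz.
- move=> a IH b c H1 H2; inversion H1; subst; inversion H2; subst; constructor; eauto.
- move=> a IH b c H1 H2; inversion H1; subst; inversion H2; subst; constructor; eauto.
Qed.

Lemma feq_subst th a : forall b, feq a b -> feq (subst th a) (subst th b).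
Proof.
elim/form_ind': a.
- move=> x b H; inversion H; subst; exact: feq_refl.
- move=> x b H; inversion H; subst; exact: feq_refl.
- move=> x b H; inversion H; subst; exact: feq_refl.
- move=> a IH b H; inversion H; subst; constructor; eauto.
- move=> a IH b H; inversion H; subst; constructor; eauto.
- move=> l IH b H; inversion H as [| | | | |? ? H2 H3|? ? H2 H3| |]; subst; constructor.
  + move=> x /List.in_map_iff [x0 [<- Hx0]]; case: (H2 x0 Hx0) => y [Hy Hxy].
    exists (subst th y); split; [exact: List.in_map|exact: IH].
  + move=> y /List.in_map_iff [y0 [<- Hy0]]; case: (H3 y0 Hy0) => x [Hx Hxy].
    exists (subst th x); split; [exact: List.in_map|exact: IH].
- move=> l IH b H; inversion H as [| | | | |? ? H2 H3|? ? H2 H3| |]; subst; constructor.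
  + move=> x /List.in_map_iff [x0 [<- Hx0]]; case: (H2 x0 Hx0) => y [Hy Hxy].
    exists (subst th y); split; [exact: List.in_map|exact: IH].
  + move=> y /List.in_map_iff [y0 [<- Hy0]]; case: (H3 y0 Hy0) => x [Hx Hxy].
    exists (subst th x); split; [exact: List.in_map|exact: IH].
- move=> a IH b H; inversion H; subst; constructor; eauto.
- move=> a IH b H; inversion H; subst; constructor; eauto.
Qed.

Lemma feq_occ y a : forall b, feq a b -> occurs_neg y a -> occurs_neg y b.
Proof.
elim/form_ind': a.
- move=> x b H; inversion H; subst; done.
- move=> x b H; inversion H; subst; done.
- move=> x b H; inversion H; subst; done.
- move=> a IH b H; inversion H; subst; simpl; eauto.
- move=> a IH b H; inversion H; subst; simpl; eauto.
- move=> l IH b H; inversion H as [| | | | |? ? H2 H3|? ? H2 H3| |]; subst => /= /has_In [x [Hx Ho]].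
  case: (H2 x Hx) => z [Hz Hxz]; apply: (@In_has (occurs_neg y) _ _ Hz); exact: IH Hxz Ho.
- move=> l IH b H; inversion H as [| | | | |? ? H2 H3|? ? H2 H3| |]; subst => /= /has_In [x [Hx Ho]].
  case: (H2 x Hx) => z [Hz Hxz]; apply: (@In_has (occurs_neg y) _ _ Hz); exact: IH Hxz Ho.
- move=> a IH b H; inversion H; subst; simpl; eauto.
- move=> a IH b H; inversion H; subst; simpl; eauto.
Qed.

Lemma neg_neg f : neg (neg f) = f.
Proof.
elim/form_ind': f => //=; try by move=> a ->.
- move=> l IH; rewrite -map_comp (@map_ext_In _ id) ?map_id //.
- move=> l IH; rewrite -map_comp (@map_ext_In _ id) ?map_id //.
Qed.

Lemma subst_none f : subst (fun _ => None) f = f.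
Proof.
elim/form_ind': f => //=; try by move=> a ->.
- move=> l IH; rewrite (@map_ext_In _ id) ?map_id //.
- move=> l IH; rewrite (@map_ext_In _ id) ?map_id //.
Qed.

Lemma subst_neg th f : subst th (neg f) = neg (subst th f).
Proof.
elim/form_ind': f => //=; try by move=> a ->.
- by move=> x; case: (th x).
- by move=> x; case: (th x) => // g; rewrite neg_neg.
- move=> l IH; rewrite -!map_comp; congr Or; apply: map_ext_In => g Hg /=; exact: IH.
- move=> l IH; rewrite -!map_comp; congr And; apply: map_ext_In => g Hg /=; exact: IH.
Qed.

Fixpoint occ_pos (x : nat) (f : form) : bool :=
  match f with
  | FNVar _ | BVar _ => false
  | FVar y => y == x
  | Box a | Dia a => occ_pos x a
  | And l | Or l => has (occ_pos x) l
  | Mu a | Nu a => occ_pos x a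
  end.

Definition comp (th th' : nat -> option form) x :=
  match th' x with Some g => Some (subst th g) | None => th x end.

Lemma subst_comp th th' th'' psi :
  (forall x, occ_pos x psi || occurs_neg x psi -> th'' x = comp th th' x) ->
  subst th'' psi = subst th (subst th' psi).
Proof.
elim/form_ind': psi => //=; try by move=> a IH H; rewrite IH.
- move=> x H; rewrite H ?eqxx // /comp; by case: (th' x).
- move=> x H; rewrite H ?eqxx ?orbT // /comp; case: (th' x) => // g.
  by rewrite subst_neg.
- move=> l IH H; rewrite -map_comp; congr And; apply: map_ext_In => g Hg /=.
  apply: IH => // x /orP [Hx|Hx]; apply: H.
  + by rewrite (@In_has (occ_pos x) _ _ Hg Hx).
  + by rewrite (@In_has (occurs_neg x) _ _ Hg Hx) orbT.
- move=> l IH H; rewrite -map_comp; congr Or; apply: map_ext_In => g Hg /=.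
  apply: IH => // x /orP [Hx|Hx]; apply: H.
  + by rewrite (@In_has (occ_pos x) _ _ Hg Hx).
  + by rewrite (@In_has (occurs_neg x) _ _ Hg Hx) orbT.
Qed.

Lemma occ_L1 th' x g y psi :
  th' x = Some g -> occurs_neg y g -> occ_pos x psi -> occurs_neg y (subst th' psi).
Proof.
move=> Hx Hy; elim/form_ind': psi => //=.
- by move=> z /eqP ->; rewrite Hx.
- move=> l IH /has_In [h [Hh Ho]]; apply: (@In_has (occurs_neg y) _ (subst th' h)).
  + exact: List.in_map.
  + exact: IH.
- move=> l IH /has_In [h [Hh Ho]]; apply: (@In_has (occurs_neg y) _ (subst th' h)).
  + exact: List.in_map.
  + exact: IH.
Qed.

Lemma occ_L2 th' x psi :
  th' x = None -> occurs_neg x psi -> occurs_neg x (subst th' psi).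
Proof.
move=> Hx; elim/form_ind': psi => //=.
- by move=> z /eqP ->; rewrite Hx /= eqxx.
- move=> l IH /has_In [h [Hh Ho]]; apply: (@In_has (occurs_neg x) _ (subst th' h)).
  + exact: List.in_map.
  + exact: IH.
- move=> l IH /has_In [h [Hh Ho]]; apply: (@In_has (occurs_neg x) _ (subst th' h)).
  + exact: List.in_map.
  + exact: IH.
Qed.

End Aux.

Theorem lemma2p1 (F : form -> Prop) (phi : form) :
  (forall f, F f -> lc_at 0 f) ->
  Pi F (Mu phi) ->
  exists (psi : form) (th : nat -> option form),
    F (Mu psi) /\
    (forall x g, th x = Some g -> Pi F g) /\
    feq phi (subst th psi).
Proof.
move=> _ HP.
suff: exists (psi : form) (th : nat -> option form),
    F (Mu psi) /\
    (forall x g, th x = Some g -> Pi F g) /\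
    (forall x, th x <> None -> ~~ occurs_neg x psi) /\
    feq phi (subst th psi).
  by case=> psi [th [H1 [H2 [_ H3]]]]; exists psi, th.
move: HP; move Ea: (Mu phi) => a0 HP; elim: HP phi Ea => //.
- move=> a Fa phi Ea; subst; exists phi, (fun _ => None); do !split => //.
  by rewrite subst_none; exact: feq_refl.
- move=> a th Pa IHa Hneg Pth IHth phi.
  case: a Pa IHa Hneg => //=.
  + move=> x _ _ _; case Ex: (th x) => [g|] // Eg; subst g; exact: IHth Ex _ erefl.
  + move=> x _ _ Hneg; case Ex: (th x) => [g|] //.
    by have := Hneg x; rewrite Ex eqxx => /(_ ltac:(discriminate)).
  + move=> a' Pa IHa Hneg [Ephi]; subst phi.
    case: (IHa a' erefl) => psi [th' [Fpsi [Pth' [Nth' Heq]]]].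
    set th'' := fun x => match th' x with
                 | Some g => if occ_pos x psi then Some (subst th g) else None
                 | None => th x end.
    have Hn : forall y, th y <> None -> ~~ occurs_neg y (subst th' psi).
      move=> y Hy; apply/negP => Ho; move/negP: (Hneg y Hy); apply.
      exact: (feq_occ _ _ _ (feq_sym _ _ Heq) Ho).
    exists psi, th''; split => //; split; [|split].
    * move=> x g; rewrite /th''; case Ex: (th' x) => [h|].
      - case Ox: (occ_pos x psi) => //; case=> <-; apply: Pi_subst.
        + exact: Pth' Ex.
        + move=> y Hy; apply/negP => Ho; move/negP: (Hn y Hy); apply.
          exact: occ_L1 Ex Ho Ox.
        + exact: Pth.
      - exact: Pth.
    * move=> x; rewrite /th''; case Ex: (th' x) => [h|].
      - case: (occ_pos x psi) => // _; apply: Nth'; by rewrite Ex.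
      - move=> Hx; apply/negP => Ho; move/negP: (Hn x Hx); apply.
        exact: occ_L2 Ex Ho.
    * rewrite (@subst_comp th th' th'').
      - exact: feq_subst.
      - move=> x /orP [Hx|Hx]; rewrite /th'' /comp.
        + by case: (th' x) => // g; rewrite Hx.
        + case Ex: (th' x) => [g|] //.
          by move: (Nth' x); rewrite Ex Hx => /(_ ltac:(discriminate)).
- move=> a b Pa IHa Hab phi Eb; subst b.
  inversion Hab as [| | | | | | |a' b' Hab'|]; subst.
  case: (IHa a' erefl) => psi [th [H1 [H2 [H3 H4]]]].
  exists psi, th; do !split => //.
  exact: (feq_trans _ _ _ (feq_sym _ _ Hab') H4).
Qed.
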